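(* Let $\mathcal{A}$ be a non-unital Banach algebra. Then every approximately right invertible element $x\in\mathcal{A}$ is a left topological divisor of zero, i.e. $\inf\{\|xy\| : y\in\mathcal{A},\ \|y\|=1\}=0$.
   Context: An approximate identity in $\mathcal{A}$ is a net $(e_j)_{j\in J}$ with $\lim_j e_jy=\lim_j ye_j=y$ for all $y\in\mathcal{A}$. An element $x$ is approximately right invertible if there is a net $(r_j)$ in $\mathcal{A}$ such that $(xr_j)$ is an approximate identity in $\mathcal{A}$. *)

(* Defs.v *)
From HB Require Import structures.
From mathcomp Require Import all_boot all_order all_algebra.
From mathcomp Require Import all_classical all_reals all_analysis.
Set Implicit Arguments. Unset Strict Implicit. Unset Printing Implicit Defensive.
Import Order.TTheory GRing.Theory Num.Theory.
Import numFieldNormedType.Exports.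
Local Open Scope ring_scope.

Record banach_algebra (K : numFieldType) (V : completeNormedModType K)
    (mul : V -> V -> V) : Prop := BanachAlgebra {
  ba_mulA : forall u v w, mul u (mul v w) = mul (mul u v) w;
  ba_linl : forall (a : K) u v w, mul (a *: u + v) w = a *: mul u w + mul v w;
  ba_linr : forall (a : K) u v w, mul u (a *: v + w) = a *: mul u v + mul u w;
  ba_normM : forall u v, `|mul u v| <= `|u| * `|v|
}.

Definition non_unital (K : numFieldType) (V : completeNormedModType K)
    (mul : V -> V -> V) : Prop :=
  ~ exists e : V, forall y, mul e y = y /\ mul y e = y.

Definition directed_set (J : Type) (le : J -> J -> Prop) : Prop :=
  [/\ (forall i, le i i),
      (forall i j k, le i j -> le j k -> le i k),
      (exists j : J, True) &
      (forall i j, exists k, le i k /\ le j k)].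

Definition net_lim (K : numFieldType) (V : normedModType K)
    (J : Type) (le : J -> J -> Prop) (u : J -> V) (l : V) : Prop :=
  forall eps : K, 0 < eps -> exists j0, forall j, le j0 j -> `|u j - l| < eps.

Definition approx_identity (K : numFieldType) (V : completeNormedModType K)
    (mul : V -> V -> V) (J : Type) (le : J -> J -> Prop) (e : J -> V) : Prop :=
  forall y : V, net_lim le (fun j => mul (e j) y) y /\
                net_lim le (fun j => mul y (e j)) y.

Definition approx_right_invertible (K : numFieldType)
    (V : completeNormedModType K) (mul : V -> V -> V) (x : V) : Prop :=
  exists (J : Type) (le : J -> J -> Prop) (r : J -> V),
    directed_set le /\ approx_identity mul le (fun j => mul x (r j)).

Definition left_top_divisor_of_zero (K : numFieldType)
    (V : completeNormedModType K) (mul : V -> V -> V) (x : V) : Prop :=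
  forall eps : K, 0 < eps -> exists y : V, `|y| = 1 /\ `|mul x y| < eps.

(* Main.v *)
Require Import Defs.
From HB Require Import structures.
From mathcomp Require Import all_boot all_order all_algebra.
From mathcomp Require Import all_classical all_reals all_analysis.
Import Order.TTheory GRing.Theory Num.Theory.
Import numFieldNormedType.Exports.
Local Open Scope ring_scope.

Local Open Scope classical_set_scope.
Lemma net_complete (K : numFieldType) (V : completeNormedModType K)
  (J : Type) (le : J -> J -> Prop) (w : J -> V) :
  directed_set le ->
  (forall eps : K, 0 < eps -> exists j0, forall j, le j0 j -> `|w j0 - w j| < eps) ->
  exists u, net_lim le w u.
Proof.
move=> [lerefl letrans [i0 _] ub] hC.
pose F := filter_from setT (fun j0 => (fun j => le j0 j) : set J).
have FF : Filter F.
  apply: filter_fromT_filter; first by exists i0.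
  move=> i j; have [k [ik jk]] := ub i j; exists k => l /= kl.
  by split; apply: letrans kl.
have PF : ProperFilter F.
  by apply: filter_from_proper => i _; exists i; apply: lerefl.
have : cvg (w @ F).
  apply/cauchy_cvgP/cauchyP => eps eps0.
  have [j0 hj0] := hC eps eps0.
  exists (w j0); exists j0 => // j /= hj.
  by rewrite -ball_normE /=; apply: hj0.
move=> /cvgrPdistC_lt hl; exists (lim (w @ F)) => eps eps0.
have [j0 _ hj0] := hl eps eps0.
by exists j0 => j hj; apply: (hj0 j).
Qed.
Lemma mul0r_ba (K : numFieldType) (V : completeNormedModType K)
  (mul : V -> V -> V) (hA : banach_algebra mul) u : mul u 0 = 0 /\ mul 0 u = 0.
Proof.
split; apply/normr0_eq0/eqP; rewrite eq_le normr_ge0 andbT.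
  by apply: le_trans (ba_normM hA _ _) _; rewrite normr0 mulr0.
by apply: le_trans (ba_normM hA _ _) _; rewrite normr0 mul0r.
Qed.

Lemma mulBr_ba (K : numFieldType) (V : completeNormedModType K)
  (mul : V -> V -> V) (hA : banach_algebra mul) u v w :
  mul u (v - w) = mul u v - mul u w.
Proof.
by rewrite addrC -scaleN1r (ba_linr hA) scaleN1r addrC.
Qed.

Lemma mulBl_ba (K : numFieldType) (V : completeNormedModType K)
  (mul : V -> V -> V) (hA : banach_algebra mul) u v w :
  mul (v - w) u = mul v u - mul w u.
Proof.
by rewrite addrC -scaleN1r (ba_linl hA) scaleN1r addrC.
Qed.

Lemma mulZr_ba (K : numFieldType) (V : completeNormedModType K)
  (mul : V -> V -> V) (hA : banach_algebra mul) u (a : K) v :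
  mul u (a *: v) = a *: mul u v.
Proof.
by rewrite -[a *: v]addr0 (ba_linr hA) (mul0r_ba _ _ _ hA u).1 addr0.
Qed.

Lemma small0 (K : numFieldType) (V : normedModType K) (v : V) :
  (forall e : K, 0 < e -> `|v| < e + e) -> v = 0.
Proof.
move=> h; apply/eqP; apply/negPn/negP => hv.
have hp : 0 < `|v| by rewrite normr_gt0.
have := h (`|v| / 2%:R) (divr_gt0 hp (ltr0Sn _ 1)).
by rewrite -splitr ltxx.
Qed.

Theorem proposition2p22 (K : numFieldType) (V : completeNormedModType K)
    (mul : V -> V -> V) (hA : banach_algebra mul) (hnu : non_unital mul)
    (x : V) (hx : approx_right_invertible mul x) :
  left_top_divisor_of_zero mul x.
Proof.
move=> c c0; apply: contrapT => hne.
have hbb : forall z, c * `|z| <= `|mul x z|.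
  move=> z; have [->|z0] := eqVneq z 0.
    by rewrite normr0 mulr0 normr_ge0.
  have zp : 0 < `|z| by rewrite normr_gt0.
  have hy : `| (`|z|^-1 *: z) | = 1.
    by rewrite normrZ ger0_norm ?invr_ge0 ?normr_ge0 // mulVf // normr_eq0.
  have : c <= `|mul x (`|z|^-1 *: z)|.
    rewrite real_leNgt ?(gtr0_real c0) ?normr_real //; apply/negP => hlt.
        by apply: hne; exists (`|z|^-1 *: z); split.
    rewrite (mulZr_ba _ _ _ hA) normrZ ger0_norm ?invr_ge0 ?normr_ge0 //.
  by rewrite ler_pdivlMl // mulrC.
case: hx => J [le [r [hd hai]]].
have hd' := hd; case: hd' => [lerefl letrans _ ub].
pose w j := mul (r j) x.
have hxw : forall j, mul x (w j) = mul (mul x (r j)) x.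
  by move=> j; rewrite /w (ba_mulA hA).
have [u hu] : exists u, net_lim le w u.
  apply: net_complete => // e e0.
  have t0 : 0 < c * e / 2%:R by rewrite divr_gt0 ?mulr_gt0 ?(ltr0Sn _ 1).
  have [j0 hj0] := (hai x).1 _ t0.
  exists j0 => j hj.
  rewrite -(ltr_pM2l c0).
  apply: le_lt_trans (hbb _) _.
  rewrite (mulBr_ba _ _ _ hA) !hxw.
  apply: le_lt_trans (ler_distD x _ _) _.
  rewrite [c * e]splitr; apply: ltrD; first by apply: hj0.
  by rewrite distrC; apply: hj0.
have hxu : mul x u = x.
  apply/eqP; rewrite -subr_eq0; apply/eqP; apply: small0 => e e0.
  have d0 : 0 < e / (`|x| + 1) by rewrite divr_gt0 // ltr_wpDl ?normr_ge0.
  have [j1 hj1] := hu _ d0.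
  have [j2 hj2] := (hai x).1 _ e0.
  have [k [k1 k2]] := ub j1 j2.
  have -> : mul x u - x = (mul x u - mul x (w k)) + (mul x (w k) - x).
    by rewrite addrA subrK.
  apply: le_lt_trans (ler_normD _ _) _.
  apply: ltrD; last by rewrite hxw; apply: hj2.
  rewrite -(mulBr_ba _ _ _ hA).
  apply: le_lt_trans (ba_normM hA _ _) _.
  apply: (@le_lt_trans _ _ ((`|x| + 1) * `|u - w k|)).
    by rewrite ler_wpM2r ?normr_ge0 // lerDl.
  rewrite -(ltr_pM2l (ltr_wpDl (normr_ge0 x) ltr01)) in d0.
  rewrite mulrC -ltr_pdivlMr ?ltr_wpDl ?normr_ge0 //.
  by rewrite distrC; apply: hj1.
have hul : forall y, mul u y = y.
  move=> y; apply/eqP; rewrite -subr_eq0 -normr_le0.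
  rewrite -(ler_pM2l c0) mulr0.
  apply: le_trans (hbb _) _.
  by rewrite (mulBr_ba _ _ _ hA) (ba_mulA hA) hxu subrr normr0.
have hur : forall y, mul y u = y.
  move=> y; apply/eqP; rewrite -subr_eq0; apply/eqP.
  set z := mul y u - y.
  have hz : mul z x = 0.
    by rewrite /z (mulBl_ba _ _ _ hA) -(ba_mulA hA) hul subrr.
  apply: small0 => e e0.
  have [j hj] := (hai z).2 _ e0.
  have := hj j (lerefl j).
  rewrite (ba_mulA hA) hz (mul0r_ba _ _ _ hA _).2 sub0r normrN => h.
  by apply: lt_le_trans h _; rewrite lerDr ltW.
by apply: hnu; exists u => y; split.
Qed.
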